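(* Let $\mathcal X=(x_n)_{n\in\mathbb N}$ be a fundamental minimal system for $\mathbb X$ with dual system $\mathcal X^*=(x_n^* )$, and let $K\ge1$. Suppose that $\sup_n\|x_n^*\|<\infty$ and that for each $f\in\langle\mathcal X\rangle$ there are $n(f)\in\mathbb N$ and $\delta(f)>0$ such that $\|f\|\le K\|f+g\|$ for every $g\in\langle\mathcal X_{>n(f)}\rangle$ with $\|g\|_\infty<\delta(f)$. Then for each $f\in\langle\mathcal X\rangle$ there is $m(f)\in\mathbb N$ such that $\|f\|\le K\|f+g\|$ for every $g\in\langle\mathcal X_{>m(f)}\rangle$. Consequently, $\langle\mathcal X^*\rangle$ is a $K^{-1}$-norming subspace of $\mathbb X^*$.
   Context: Throughout, $\mathbb X$ is an infinite-dimensional separable Banach space over $\mathbb F\in\{\mathbb R,\mathbb C\}$. A (fundamental minimal) system for $\mathbb X$ is a sequence $\mathcal X=(x_n)_{n\in\mathbb N}\subset\mathbb X$ whose linear span $\langle\mathcal X\rangle$ is dense in $\mathbb X$ and for which there is a sequence $\mathcal X^*=(x_n^* )_{n\in\mathbb N}\subset\mathbb X^*$ with $x_n^*(x_k)=\delta_{nk}$ for all $n,k$; $\mathcal X^*$ is called the dual system. For $f\in\mathbb X$, $\|f\|_\infty:=\sup_n|x_n^*(f)|$. For $m\in\mathbb N$, $\mathcal X_{>m}=(x_n)_{n>m}$ and $\langle\mathcal X_{>m}\rangle$ is its linear span. A subspace $\mathbb Z\subset\mathbb X^*$ is $c$-norming ($0<c\le 1$) if $c\|f\|\le\sup\{|f^*(f)|: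 f^*\in\mathbb Z,\ \|f^*\|=1\}$ for all $f\in\mathbb X$. *)

(* Defs.v *)
From HB Require Import structures.
From mathcomp Require Import all_boot all_order all_algebra.
From mathcomp Require Import all_classical all_reals all_analysis.
From mathcomp Require Import complex.

Set Implicit Arguments.
Unset Strict Implicit.
Unset Printing Implicit Defensive.

Import Order.TTheory GRing.Theory Num.Theory.
Import numFieldNormedType.Exports.
Local Open Scope classical_set_scope.
Local Open Scope ring_scope.

Section Defs.
Variables (F : numFieldType) (V : normedModType F).

Definition dual_elem (phi : V -> F) : Prop :=
  (forall (a : F) (x y : V), phi (a *: x + y) = a * phi x + phi y) /\
  continuous phi.

Definition dual_norm_le (phi : V -> F) (C : F) : Prop :=
  forall v : V, `|phi v| <= C * `|v|.

Definition dual_norm_eq1 (phi : V -> F) : Prop :=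
  dual_norm_le phi 1 /\
  (forall e : F, 0 < e -> exists v : V, `|v| <= 1 /\ 1 - e < `|phi v|).

Definition lin_span (x : nat -> V) : set V :=
  [set v | exists (s : seq nat) (c : nat -> F), v = \sum_(i <- s) c i *: x i].

Definition tail_span (x : nat -> V) (m : nat) : set V :=
  [set v | exists (s : seq nat) (c : nat -> F),
      (forall i, i \in s -> (m < i)%N) /\ v = \sum_(i <- s) c i *: x i].

Definition dual_span (xs : nat -> V -> F) : set (V -> F) :=
  [set phi | exists (s : seq nat) (c : nat -> F),
      phi = fun v => \sum_(i <- s) c i * xs i v].

Definition fundamental_minimal_system (x : nat -> V) (xs : nat -> V -> F) : Prop :=
  closure (lin_span x) = setT /\
  (forall n, dual_elem (xs n)) /\
  (forall n k, xs n (x k) = (n == k)%:R).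

(* ||f||_oo < d, where ||f||_oo = sup_n |x_n^*(f)| (sup < d written out). *)
Definition sup_coord_lt (xs : nat -> V -> F) (f : V) (d : F) : Prop :=
  exists2 c : F, c < d & forall n, `|xs n f| <= c.

(* Z is a c-norming subset of V^*:
   c ||f|| <= sup { |phi f| : phi in Z, ||phi|| = 1 } for all f (sup written out). *)
Definition norming (c : F) (Z : set (V -> F)) : Prop :=
  forall f : V, forall e : F, 0 < e ->
    exists phi, Z phi /\ dual_norm_eq1 phi /\ c * `|f| - e < `|phi f|.

End Defs.

Definition Cor33 (F : numFieldType) : Prop :=
  forall (V : completeNormedModType F) (x : nat -> V) (xs : nat -> V -> F) (K : F),
    fundamental_minimal_system x xs ->
    1 <= K ->
    (exists C : F, forall n, dual_norm_le (xs n) C) ->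
    (forall f, lin_span x f ->
       exists (n : nat) (d : F), 0 < d /\
         forall g, tail_span x n g -> sup_coord_lt xs g d ->
           `|f| <= K * `|f + g|) ->
    (forall f, lin_span x f ->
       exists m : nat, forall g, tail_span x m g -> `|f| <= K * `|f + g|) /\
    norming K^-1 (dual_span xs).

(* Main.v *)
Require Import Defs.
From HB Require Import structures.
From mathcomp Require Import all_boot all_order all_algebra.
From mathcomp Require Import all_classical all_reals all_analysis.
From mathcomp Require Import complex.
Set Implicit Arguments.
Unset Strict Implicit.
Unset Printing Implicit Defensive.
Import Order.TTheory GRing.Theory Num.Theory.
Import numFieldNormedType.Exports.
Local Open Scope classical_set_scope.
Local Open Scope ring_scope.
From mathcomp Require Import ring lra.
From mathcomp Require Import zify.
Section HBfin.
Variables (R : realType) (n : nat) (p : 'rV[R]_n -> R).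
Hypothesis pD : forall a b, p (a + b) <= p a + p b.
Hypothesis pZ : forall t a, 0 <= t -> p (t *: a) = t * p a.

Definition ell (c : 'cV[R]_n) (a : 'rV[R]_n) := (a *m c) 0 0.
Definition Good (W : 'M[R]_n) c := forall w : 'rV[R]_n, (w <= W)%MS -> ell c w <= p w.

Lemma ellD c a b : ell c (a + b) = ell c a + ell c b.
Proof. by rewrite /ell mulmxDl mxE. Qed.
Lemma ellZ c t a : ell c (t *: a) = t * ell c a.
Proof. by rewrite /ell -scalemxAl mxE. Qed.
Lemma ellcD c d a : ell (c + d) a = ell c a + ell d a.
Proof. by rewrite /ell mulmxDr mxE. Qed.
Lemma ellcZ c t a : ell (t *: c) a = t * ell c a.
Proof. by rewrite /ell -scalemxAr mxE. Qed.
Lemma ell0 a : ell 0 a = 0.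
Proof. by rewrite /ell mulmx0 mxE. Qed.

Lemma p0 : p 0 = 0.
Proof. by rewrite -(scale0r (0 : 'rV[R]_n)) pZ // mul0r. Qed.

Lemma ext (W : 'M[R]_n) (c : 'cV[R]_n) (e : 'rV[R]_n) : Good W c -> ~~ (e <= W)%MS ->
 exists c', [/\ Good (W + e)%MS c', (forall w, (w <= W)%MS -> ell c' w = ell c w) &
   (forall x, (forall w, (w <= W)%MS -> x <= p (w + e) - ell c w) -> x <= ell c' e)].
Proof.
move=> gW eW.
set k := e *m cokermx W.
have [j kj] : exists j, k 0 j != 0.
  apply/existsP; apply: contraNT eW => /existsPn H; rewrite submxE -/k.
  apply/eqP/rowP => i; move: (H i); rewrite negbK => /eqP ->; by rewrite mxE.
pose mu : 'cV[R]_n := cokermx W *m ((k 0 j)^-1 *: delta_mx j 0).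
have muW w : (w <= W)%MS -> ell mu w = 0.
  by rewrite submxE => /eqP Hw; rewrite /ell /mu mulmxA Hw mul0mx mxE.
have mue : ell mu e = 1.
  have ck : col j k 0 0 = k 0 j by rewrite mxE.
  by rewrite /ell /mu mulmxA -/k -scalemxAr -colE [LHS]mxE ck mulVf.
set B := [set y | exists2 w, (w <= W)%MS & y = p (w + e) - ell c w].
have Bn : B !=set0 by exists (p (0 + e) - ell c 0); exists 0 => //; exact: sub0mx.
have Blb w1 : (w1 <= W)%MS -> lbound B (ell c w1 - p (w1 - e)).
  move=> w1W _ [w wW ->]; rewrite lerBrDr addrAC lerBlDr.
  rewrite -ellD (le_trans (gW _ _)) ?addmx_sub //.
  by rewrite (le_trans _ (pD _ _)) // addrCA addrK.
have hB : has_lbound B by exists (ell c 0 - p (0 - e)); apply: Blb; exact: sub0mx.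
set g := inf B.
exists (c + (g - ell c e) *: mu); split.
- move=> v /sub_addsmxP [[u1 u2] /= ->].
  set w := u1 *m W; set s := u2 0 0.
  have wW : (w <= W)%MS by exact: submxMl.
  rewrite [u2]mx11_scalar mul_scalar_mx -/s.
  rewrite ellcD ellcZ !ellD !ellZ muW // mue add0r mulr1.
  have -> : ell c w + s * ell c e + (g - ell c e) * s = ell c w + s * g by ring.
  have [s0|s0|->] := ltrgtP s 0.
  + set r := - s.
    have rp : 0 < r by rewrite oppr_gt0.
    have E1 : p (w + s *: e) = r * p (r^-1 *: w - e).
      rewrite -pZ ?(ltW rp) //; congr p.
      by rewrite scalerBr scalerA mulfV ?gt_eqF // scale1r /r scaleNr opprK.
    have H := lb_le_inf Bn (Blb _ (scalemx_sub r^-1 wW)).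
    rewrite ellZ in H.
    have H' := ler_wpM2l (ltW rp) H.
    rewrite mulrBr mulrA mulfV ?gt_eqF // mul1r in H'.
    rewrite E1.
    have -> : s = - r by rewrite /r opprK.
    rewrite mulNr. lra.
  + have H := ge_inf hB (ex_intro2 _ _ ((s^-1) *: w) (scalemx_sub _ wW) erefl).
    have H' := ler_wpM2l (ltW s0) H.
    rewrite mulrBr ellZ mulrA mulfV ?gt_eqF // mul1r in H'.
    have E1 : p (w + s *: e) = s * p (s^-1 *: w + e).
      rewrite -pZ ?(ltW s0) //; congr p.
      by rewrite scalerDr scalerA mulfV ?gt_eqF // scale1r.
    rewrite E1. lra.
  + by rewrite mul0r addr0 scale0r addr0; exact: gW.
- by move=> w wW; rewrite ellcD ellcZ muW // mulr0 addr0.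
- move=> x Hx; rewrite ellcD ellcZ mue mulr1 addrC subrK.
  by apply: lb_le_inf => // _ [w wW ->]; exact: Hx.
Qed.


Lemma hb_steps (a0 : 'rV[R]_n) (es : seq 'rV[R]_n) :
  exists W c, [/\ Good W c, ell c a0 = p a0, (a0 <= W)%MS &
                  forall e, e \in es -> (e <= W)%MS].
Proof.
elim: es => [|e es [W [c [gW ca0 a0W esW]]]].
- have [->|a0n] := eqVneq a0 0.
    exists 0, 0; split => //; last exact: sub0mx.
    + by move=> w; rewrite submx0 => /eqP ->; rewrite ell0 p0.
    + by rewrite ell0 p0.
  have g0 : Good 0 0 by move=> w; rewrite submx0 => /eqP ->; rewrite ell0 p0.
  have [|c' [g' _ lb]] := ext g0 (e := a0); first by rewrite submx0.
  exists ((0 : 'M[R]_n) + a0)%MS, c'; split => //; last exact: addsmxSr.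
  apply/eqP; rewrite eq_le g' ?addsmxSr // lb // => w.
  by rewrite submx0 => /eqP ->; rewrite add0r ell0 subr0.
- have [eW|eW] := boolP (e <= W)%MS.
    exists W, c; split => // e'; rewrite inE => /orP [/eqP -> //|]; exact: esW.
  have [c' [g' pres _]] := ext gW eW.
  exists (W + e)%MS, c'; split => //.
  + by rewrite pres.
  + exact: submx_trans a0W (addsmxSl _ _).
  + move=> e'; rewrite inE => /orP [/eqP ->|/esW H]; first exact: addsmxSr.
    exact: submx_trans H (addsmxSl _ _).
Qed.

Lemma hb (a0 : 'rV[R]_n) : exists c : 'cV[R]_n,
  (forall a, ell c a <= p a) /\ ell c a0 = p a0.
Proof.
have [W [c [gW ca0 _ esW]]] := hb_steps a0 [seq row i (1%:M : 'M[R]_n) | i <- enum 'I_n].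
exists c; split => // a; apply: gW.
apply: submx_trans (submx1 a) _; apply/row_subP => i; apply: esW.
by apply: map_f; rewrite mem_enum.
Qed.

End HBfin.
Section Quot.
Variables (R : realType) (V : zmodType) (S : set V) (nrm : V -> R) (sc : R -> V -> V)
  (n : nat) (T : V -> 'rV[R]_n).
Hypotheses (S0 : S 0) (SZ : forall t v, 0 < t -> S v -> S (sc t v)).
Hypotheses (nrm_ge0 : forall v, 0 <= nrm v) (nrm0 : nrm 0 = 0)
  (nrmD : forall v w, nrm (v + w) <= nrm v + nrm w)
  (nrmZ : forall t v, 0 < t -> nrm (sc t v) = t * nrm v).
Hypotheses (SD : forall v w, S v -> S w -> S (v + w))
  (TD : forall v w, T (v + w) = T v + T w) (T0 : T 0 = 0)
  (TZ : forall t v, T (sc t v) = t *: T v)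
  (Tsurj : forall a, exists2 v, S v & T v = a).

Definition Nset a := [set y | exists v, [/\ S v, T v = a & y = nrm v]].
Definition N a := inf (Nset a).

Lemma Nne a : Nset a !=set0.
Proof. by have [v Sv Tv] := Tsurj a; exists (nrm v), v. Qed.
Lemma Nlb a : has_lbound (Nset a).
Proof. by exists 0 => _ [v [_ _ ->]]. Qed.
Lemma N_le v : S v -> N (T v) <= nrm v.
Proof. by move=> Sv; apply: ge_inf; [exact: Nlb| exists v]. Qed.
Lemma N_ge a x : (forall v, S v -> T v = a -> x <= nrm v) -> x <= N a.
Proof. by move=> H; apply: lb_le_inf; [exact: Nne| move=> _ [v [Sv Tv ->]]; exact: H]. Qed.
Lemma N_approx a e : 0 < e -> exists v, [/\ S v, T v = a & nrm v < N a + e].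
Proof.
move=> e0; have [_ [v [Sv Tv ->]] H] := inf_adherent e0 (conj (Nne a) (Nlb a)).
by exists v.
Qed.

Lemma ND a b : N (a + b) <= N a + N b.
Proof.
rewrite -lerBlDl; apply: N_ge => w Sw Tw; rewrite lerBlDl -lerBlDr.
apply: N_ge => v Sv Tv; rewrite lerBlDr.
by apply: le_trans (nrmD _ _); apply: le_trans (N_le (SD Sv Sw)); rewrite TD Tv Tw.
Qed.

Lemma NZ t a : 0 <= t -> N (t *: a) = t * N a.
Proof.
rewrite le_eqVlt => /orP [/eqP <-|t0].
  rewrite scale0r mul0r; apply/eqP; rewrite eq_le.
  rewrite -{1}T0 (le_trans (N_le S0)) ?nrm0 //=.
  by apply: N_ge => v _ _; exact: nrm_ge0.
apply/eqP; rewrite eq_le; apply/andP; split.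
  rewrite mulrC -ler_pdivrMr //; apply: N_ge => v Sv Tv.
  rewrite ler_pdivrMr // mulrC -nrmZ // -Tv -TZ; exact: N_le (SZ t0 Sv).
apply: N_ge => w Sw Tw.
have ti : 0 < t^-1 by rewrite invr_gt0.
rewrite mulrC -ler_pdivlMr // mulrC -nrmZ //.
have <- : T (sc t^-1 w) = a by rewrite TZ Tw scalerA mulVf ?gt_eqF // scale1r.
exact: N_le (SZ ti Sw).
Qed.

Lemma key (u : V) (r : R) : S u -> (forall v, S v -> T v = T u -> r <= nrm v) ->
  exists c, [/\ forall v, S v -> ell c (T v) <= nrm v, r <= ell c (T u) &
     forall e, 0 < e -> exists v, [/\ S v, T v = T u & nrm v < ell c (T u) + e]].
Proof.
move=> Su H.
have [c [Hc Hu]] := @hb R n N ND NZ (T u).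
exists c; split.
- by move=> v Sv; apply: le_trans (Hc _) (N_le Sv).
- by rewrite Hu; exact: N_ge.
- by rewrite Hu; exact: N_approx.
Qed.
End Quot.
Require Import Defs.
Section Gen.
Variables (F : numFieldType) (V : normedModType F) (x : nat -> V) (xs : nat -> V -> F).
Hypothesis xs_lin : forall n a u v, xs n (a *: u + v) = a * xs n u + xs n v.
Hypothesis xs_bio : forall n k, xs n (x k) = (n == k)%:R.

Lemma xs0 n : xs n 0 = 0.
Proof.
have := xs_lin n 1 0 0; rewrite scale1r addr0 mul1r => /esym/eqP.
by rewrite -subr_eq0 addrK => /eqP.
Qed.
Lemma xsD n u v : xs n (u + v) = xs n u + xs n v.
Proof. by have := xs_lin n 1 u v; rewrite scale1r mul1r. Qed.
Lemma xsZ n a u : xs n (a *: u) = a * xs n u.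
Proof. by rewrite -[a *: u]addr0 xs_lin xs0 addr0. Qed.
Lemma xsN n u : xs n (- u) = - xs n u.
Proof. by rewrite -scaleN1r xsZ mulN1r. Qed.
Lemma xsB n u v : xs n (u - v) = xs n u - xs n v.
Proof. by rewrite xsD xsN. Qed.

Definition osum N (a : nat -> F) := \sum_(i < N) a i *: x i.
Definition trunc N (a : nat -> F) := fun i => if (i < N)%N then a i else 0.

Lemma xs_osum n N a : xs n (osum N a) = if (n < N)%N then a n else 0.
Proof.
rewrite /osum (big_morph (xs n) (xsD n) (xs0 n)).
under eq_bigr => i _ do rewrite xsZ xs_bio.
case: ifP => nN.
  rewrite (bigD1 (Ordinal nN)) //= eqxx mulr1 big1 ?addr0 // => i /negPf.
  by rewrite eq_sym -val_eqE /= => ->; rewrite mulr0.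
by rewrite big1 // => i _; case: eqP => [ni|]; [move: nN; rewrite ni ltn_ord| rewrite mulr0].
Qed.

Lemma osum_pad N N' a : (N <= N')%N -> osum N a = osum N' (trunc N a).
Proof.
move=> NN; rewrite /osum (big_ord_widen _ (fun i => a i *: x i) NN) big_mkcond.
by apply: eq_bigr => i _; rewrite /trunc; case: ifP => // _; rewrite scale0r.
Qed.

Lemma osumD N a b : osum N a + osum N b = osum N (fun i => a i + b i).
Proof. by rewrite /osum -big_split; apply: eq_bigr => i _; rewrite scalerDl. Qed.
Lemma osumZ N t a : t *: osum N a = osum N (fun i => t * a i).
Proof. by rewrite /osum scaler_sumr; apply: eq_bigr => i _; rewrite scalerA. Qed.
Lemma osumN N a : - osum N a = osum N (fun i => - a i).
Proof. by rewrite -scaleN1r osumZ; congr osum; apply: funext => i; rewrite mulN1r. Qed.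

Lemma seq_osum (s : seq nat) (c : nat -> F) N : (forall i, i \in s -> (i < N)%N) ->
  \sum_(i <- s) c i *: x i = osum N (fun i => c i *+ count_mem i s).
Proof.
elim: s => [|j s IH] H.
  by rewrite big_nil /osum big1 // => i _; rewrite mulr0n scale0r.
rewrite big_cons IH; last by move=> i iS; apply: H; rewrite inE iS orbT.
have jN : (j < N)%N by apply: H; rewrite inE eqxx.
rewrite /osum.
have -> : \sum_(i < N) (c i *+ count_mem (i : nat) (j :: s)) *: x i =
   \sum_(i < N) ((c i *+ (j == i :> nat)) *: x i + (c i *+ count_mem (i : nat) s) *: x i).
  by apply: eq_bigr => i _ /=; rewrite mulrnDr scalerDl.
rewrite big_split /=; congr (_ + _).
rewrite (bigD1 (Ordinal jN)) //= eqxx mulr1n big1 ?addr0 // => i /negPf.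
by rewrite -val_eqE /= eq_sym => ->; rewrite mulr0n scale0r.
Qed.

Lemma seq_bound (s : seq nat) : exists N, forall i, i \in s -> (i < N)%N.
Proof.
exists (\max_(i <- s) i).+1 => i iS; rewrite ltnS.
exact: (@leq_bigmax_seq _ s xpredT id i).
Qed.

Lemma span_osum v : lin_span x v <-> exists N a, v = osum N a.
Proof.
split.
  move=> [s [c ->]]; have [N HN] := seq_bound s.
  by exists N, (fun i => c i *+ count_mem i s); exact: seq_osum.
move=> [N [a ->]]; exists (iota 0 N), a.
by rewrite /osum -(big_mkord xpredT (fun i => a i *: x i)) /index_iota subn0.
Qed.

Lemma span_osum_big v N0 : lin_span x v -> exists N a, (N0 <= N)%N /\ v = osum N a.
Proof.
move=> /span_osum [N [a ->]]; exists (maxn N N0), (trunc N a); split.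
  exact: leq_maxr.
exact: osum_pad (leq_maxl _ _).
Qed.

Lemma tail_osum m v : tail_span x m v <->
   exists N a, (forall i, (i <= m)%N -> a i = 0) /\ v = osum N a.
Proof.
split.
  move=> [s [c [Hs ->]]]; have [N HN] := seq_bound s.
  exists N, (fun i => c i *+ count_mem i s); split; last exact: seq_osum.
  move=> i im; rewrite (count_memPn _) ?mulr0n //; apply/negP => /Hs.
  by rewrite ltnNge im.
move=> [N [a [Ha ->]]]; exists [seq i <- iota 0 N | (m < i)%N], a; split.
  by move=> i; rewrite mem_filter => /andP [].
rewrite big_filter big_mkcond /osum -(big_mkord xpredT (fun i => a i *: x i)).
rewrite /index_iota subn0; apply: eq_bigr => i _; case: ltnP => // im.
by rewrite Ha // scale0r.
Qed.

Lemma span_tail m v : tail_span x m v -> lin_span x v.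
Proof. by move=> [s [c [_ ->]]]; exists s, c. Qed.

Lemma tail_mono m m' v : (m <= m')%N -> tail_span x m' v -> tail_span x m v.
Proof.
move=> mm [s [c [Hs ->]]]; exists s, c; split => // i /Hs; exact: leq_ltn_trans.
Qed.

Lemma span_add u v : lin_span x u -> lin_span x v -> lin_span x (u + v).
Proof.
move=> /span_osum [N [a ->]] /span_osum [N' [b ->]].
apply/span_osum; exists (maxn N N'), (fun i => trunc N a i + trunc N' b i).
by rewrite -osumD -!osum_pad ?leq_maxl ?leq_maxr.
Qed.

Lemma span_scale t v : lin_span x v -> lin_span x (t *: v).
Proof. by move=> /span_osum [N [a ->]]; apply/span_osum; exists N, (fun i => t * a i); rewrite osumZ. Qed.

Lemma span0 : lin_span x 0.
Proof. by exists [::], (fun _ => 0); rewrite big_nil. Qed.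


Section Part1.
Variables (C : F) (C0 : 0 <= C) (xs_bd : forall n v, `|xs n v| <= C * `|v|).
Hypothesis archi : forall y : F, 0 <= y -> exists k : nat, y < k%:R.

Lemma part1 (K : F) (f : V) : 1 <= K ->
 (exists (n : nat) (d : F), 0 < d /\ forall g, tail_span x n g -> sup_coord_lt xs g d ->
     `|f| <= K * `|f + g|) ->
 exists m, forall g, tail_span x m g -> `|f| <= K * `|f + g|.
Proof.
move=> K1 [n0 [d [d0 Hd]]].
have K0 : 0 <= K by exact: le_trans ler01 K1.
case: (pselect (exists m, forall g, tail_span x m g -> `|f| <= K * `|f + g|)) => // Hn.
exfalso.
have H m : exists g, tail_span x m g /\ K * `|f + g| < `|f|.
  case: (pselect (exists g, tail_span x m g /\ K * `|f + g| < `|f|)) => // H2.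
  exfalso; apply: Hn; exists m => g tg.
  rewrite real_leNgt ?ger0_real ?mulr_ge0 ?normr_ge0 //.
  by apply/negP => lt; apply: H2; exists g.
set B := C * (`|f| + `|f|).
have B0 : 0 <= B by rewrite mulr_ge0 ?addr_ge0 ?normr_ge0.
have gB g : K * `|f + g| < `|f| -> forall i, `|xs i g| <= B.
  move=> Hg i; apply: le_trans (xs_bd i g) _; apply: ler_wpM2l => //.
  have -> : g = (f + g) - f by rewrite addrC addKr.
  apply: le_trans (ler_normB _ _) _; rewrite lerD2r.
  exact: le_trans (ler_peMl (normr_ge0 _) K1) (ltW Hg).
have inv k : exists M a, [/\ forall i, (i <= n0)%N -> a i = 0,
    forall i, `|xs i (osum M a)| <= B &
    K * `|k.+1%:R *: f + osum M a| < k.+1%:R * `|f|].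
  elim: k => [|k [M [a [Ha Hb Hk]]]].
    have [g [tg Hg]] := H n0; have [N [b [Hb' eg]]] := (tail_osum _ _).1 tg.
    exists N, b; split => //; first by move=> i; rewrite -eg; exact: gB.
    by rewrite scale1r mul1r -eg.
  have [g [tg Hg]] := H (maxn n0 M); have [N [b [Hb' eg]]] := (tail_osum _ _).1 tg.
  exists (M + N)%N, (fun i => trunc M a i + trunc N b i); split.
  - move=> i iN; rewrite /trunc Ha // Hb' ?if_same ?addr0 //.
    exact: leq_trans iN (leq_maxl _ _).
  - move=> i; rewrite -osumD -!osum_pad ?leq_addl ?leq_addr // -eg xsD.
    case: (ltnP i M) => iM.
      have -> : xs i g = 0.
        by rewrite eg xs_osum Hb' ?if_same // (leq_trans (ltnW iM)) ?leq_maxr.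
      by rewrite addr0.
    by rewrite xs_osum ltnNge iM /= add0r; exact: gB.
  - rewrite -osumD -!osum_pad ?leq_addl ?leq_addr // -eg.
    have -> : k.+2%:R *: f + (osum M a + g) = (k.+1%:R *: f + osum M a) + (f + g).
      by rewrite mulrSr scalerDl scale1r addrACA.
    apply: le_lt_trans (ler_wpM2l K0 (ler_normD _ _)) _.
    rewrite mulrDr [k.+2%:R]mulrSr mulrDl mul1r; exact: ltrD Hk Hg.
have [k Hk] := archi (divr_ge0 B0 (ltW d0)).
have [M [a [Ha Hb Hk']]] := inv k.
have kp : 0 < k.+1%:R :> F by rewrite ltr0n.
set t := (k.+1%:R : F)^-1.
have t0 : 0 < t by rewrite invr_gt0.
have := Hd (t *: osum M a).
have /[swap]/[apply] : tail_span x n0 (t *: osum M a).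
  by apply/tail_osum; exists M, (fun i => t * a i); split; [move=> i /Ha ->; rewrite mulr0| rewrite osumZ].
have /[swap]/[apply] : sup_coord_lt xs (t *: osum M a) d.
  exists (B * t).
    rewrite ltr_pdivrMr // mulrC; apply: lt_le_trans (_ : k%:R * d <= _).
      by rewrite -ltr_pdivrMr.
    by rewrite ler_wpM2r ?(ltW d0) // ler_nat.
  by move=> i; rewrite xsZ normrM gtr0_norm // mulrC ler_wpM2r ?(ltW t0).
have -> : f + t *: osum M a = t *: (k.+1%:R *: f + osum M a).
  by rewrite scalerDr scalerA mulVf ?gt_eqF // scale1r.
rewrite normrZ gtr0_norm // mulrCA => Hc.
have H2 : t * (K * `|k.+1%:R *: f + osum M a|) < t * (k.+1%:R * `|f|) by rewrite ltr_pM2l.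
have := le_lt_trans Hc H2.
by rewrite mulrA mulVf ?gt_eqF // mul1r ltxx.
Qed.
End Part1.

Lemma density v e : closure (lin_span x) = setT -> 0 < e ->
  exists w, lin_span x w /\ `|v - w| < e.
Proof.
move=> cl e0; have : closure (lin_span x) v by rewrite cl.
move=> /(_ _ (nbhsx_ballx v e e0)) [w [Sw Bw]]; exists w; split => //.
by move: Bw; rewrite -ball_normE.
Qed.

Lemma Qlem (K : F) (u : V) N (a : nat -> F) m :
  (forall g, tail_span x m g -> `|u| <= K * `|u + g|) -> u = osum N a ->
  forall v, lin_span x v -> (forall i, (i <= m + N)%N -> xs i v = xs i u) ->
  `|u| <= K * `|v|.
Proof.
move=> Hm eu v /(span_osum_big (m + N).+1) [N' [b [NN ev]]] Hv.
have NN' : (N <= N')%N by lia.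
have -> : v = u + (v - u) by rewrite addrC subrK.
apply: Hm; apply/tail_osum.
exists N', (fun i => b i - trunc N a i); split.
  move=> i im.
  have iN' : (i < N')%N by lia.
  have := Hv i ltac:(lia).
  rewrite {1}ev eu xs_osum iN' (osum_pad _ NN') xs_osum iN' => ->.
  by rewrite subrr.
by rewrite ev eu (osum_pad _ NN') osumN osumD.
Qed.

Definition dfun L (g : nat -> F) := fun v => \sum_(i < L) g i * xs i v.

Lemma dfun_span L g : dual_span xs (dfun L g).
Proof.
exists (iota 0 L), g; apply: funext => v.
by rewrite /dfun -(big_mkord xpredT (fun i => g i * xs i v)) /index_iota subn0.
Qed.

Lemma dfunD L g u v : dfun L g (u + v) = dfun L g u + dfun L g v.
Proof. by rewrite /dfun -big_split; apply: eq_bigr => i _; rewrite xsD mulrDr. Qed.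
Lemma dfunZ L g t v : dfun L g (t *: v) = t * dfun L g v.
Proof. by rewrite /dfun mulr_sumr; apply: eq_bigr => i _; rewrite xsZ mulrCA. Qed.
Lemma dfunB L g u v : dfun L g (u - v) = dfun L g u - dfun L g v.
Proof. by rewrite dfunD -scaleN1r dfunZ mulN1r. Qed.

Section Bd.
Variables (C : F) (C0 : 0 <= C) (xs_bd : forall n v, `|xs n v| <= C * `|v|).

Lemma dfun_bd L g v : `|dfun L g v| <= (\sum_(i < L) `|g i| * C) * `|v|.
Proof.
rewrite mulr_suml; apply: le_trans (ler_norm_sum _ _ _) _.
apply: ler_sum => i _; rewrite normrM -mulrA; apply: ler_wpM2l => //.
Qed.

Lemma dfun_ext L g : closure (lin_span x) = setT ->
  (forall v, lin_span x v -> `|dfun L g v| <= `|v|) -> forall v, `|dfun L g v| <= `|v|.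
Proof.
move=> cl H v; set D := \sum_(i < L) `|g i| * C.
have D0 : 0 <= D by apply: sumr_ge0 => i _; rewrite mulr_ge0.
apply/ler_addgt0Pr => e e0.
have D1 : 0 < 1 + D by rewrite ltr_wpDr.
have [w [Sw Hw]] := density v cl (divr_gt0 e0 D1).
have -> : v = w + (v - w) by rewrite addrC subrK.
rewrite dfunD; apply: le_trans (ler_normD _ _) _.
have H1 := dfun_bd L g (v - w). have H2 := lerD (H _ Sw) H1. rewrite -/D in H2. apply: le_trans H2 _.
have Hw' : `|w| <= `|v| + `|v - w|.
  by rewrite -{1}(subKr v w); exact: ler_normB.
have -> : w + (v - w) = v by rewrite addrC subrK.
apply: le_trans (lerD Hw' (lexx _)) _.
rewrite -addrA lerD2l -{1}(mul1r `|v - w|) -mulrDl.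
rewrite -ler_pdivlMl //; rewrite mulrC; exact: ltW.
Qed.
End Bd.

Lemma finish_u (K : F) (u : V) L g : 1 <= K -> u != 0 ->
  (forall v, `|dfun L g v| <= `|v|) ->
  `|u| <= K * `|dfun L g u| ->
  (forall e, 0 < e -> exists v, dfun L g v = dfun L g u /\ `|v| < `|dfun L g u| + e) ->
  exists psi, [/\ dual_span xs psi, dual_norm_eq1 psi & `|u| <= K * `|psi u|].
Proof.
move=> K1 u0 Hle Hu Happ; exists (dfun L g); split => //; first exact: dfun_span.
split; first by move=> v; rewrite mul1r.
move=> e e0; set a := `|dfun L g u|.
have a0 : 0 < a.
  have uP : 0 < `|u| by rewrite normr_gt0.
  rewrite lt0r normr_ge0 andbT; apply/eqP => a0'.
  by move: Hu; rewrite -/a a0' mulr0 => /(lt_le_trans uP); rewrite ltxx.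
have [v [ev Hv]] := Happ _ (mulr_gt0 a0 e0).
have av : a <= `|v| by rewrite /a -ev Hle.
have v0 : 0 < `|v| by exact: lt_le_trans a0 av.
exists (`|v|^-1 *: v); split.
  by rewrite normrZ normfV normr_id mulVf ?gt_eqF.
rewrite dfunZ normrM normfV normr_id ev -/a mulrC ltr_pdivlMr //.
rewrite -subr_gt0 -subr_gt0 in Hv; rewrite -subr_gt0.
have -> : a - (1 - e) * `|v| = (a + a * e - `|v|) + e * (`|v| - a) by ring.
rewrite subr0 -/a in Hv.
apply: lt_le_trans Hv _; rewrite lerDl mulr_ge0 ?(ltW e0) // subr_ge0.
exact: av.
Qed.

Lemma norming_from (K : F) : 1 <= K -> closure (lin_span x) = setT ->
  (forall u, lin_span x u -> u != 0 ->
     exists psi, [/\ dual_span xs psi, dual_norm_eq1 psi & `|u| <= K * `|psi u|]) ->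
  norming K^-1 (dual_span xs).
Proof.
move=> K1 cl H f e e0.
have K0 : 0 < K by exact: lt_le_trans ltr01 K1.
have Ki1 : K^-1 <= 1 by rewrite invr_le1 // unitfE gt_eqF.
have Ki0 : 0 < K^-1 by rewrite invr_gt0.
have [w [Sw Hw]] := density f cl (divr_gt0 e0 (ltr0n _ 2)).
have x00 : x 0 != 0.
  apply: contra_neq (@oner_neq0 F) => x0; have := xs_bio 0 0.
  by rewrite x0 xs0 eqxx /= => H0; apply/esym.
have e2 : e / 2%:R < e by rewrite ltr_pdivrMr ?ltr0n // ltr_pMr // ltr1n.
have [w0|wn0] := eqVneq w 0.
  have Sx0 : lin_span x (x 0) by exists [:: 0%N], (fun _ => 1); rewrite big_seq1 scale1r.
  have [psi [Dp Hp _]] := H _ Sx0 x00.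
  exists psi; split => //; split => //.
  apply: lt_le_trans (normr_ge0 (psi f)); rewrite subr_lt0.
  apply: le_lt_trans (ler_piMl (normr_ge0 _) Ki1) _.
  by move: Hw; rewrite w0 subr0 => /lt_trans; apply.
have [psi [Dp [Hp1 Hp2] Hpw]] := H w Sw wn0.
exists psi; split => //; split => //.
have lin : psi f = psi w - psi (w - f).
  case: Dp => s [c ->]; rewrite -sumrB; apply: eq_bigr => i _.
  by rewrite xsB mulrBr opprB addrC subrK.
set A := `|f - w|.
have h1 : K^-1 * `|w| <= `|psi w| by rewrite ler_pdivrMl.
have h2 : `|psi w| <= `|psi f| + A.
  have -> : psi w = psi f + psi (w - f) by rewrite lin subrK.
  apply: le_trans (ler_normD _ _) _; rewrite lerD2l.
  by apply: le_trans (Hp1 _) _; rewrite mul1r /A distrC.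
have h3 : `|f| <= `|w| + A.
  have -> : f = w + (f - w) by rewrite addrC subrK.
  exact: ler_normD.
rewrite ltrBlDr.
apply: le_lt_trans (_ : _ <= K^-1 * (`|w| + A)) _; first by rewrite ler_pM2l.
rewrite mulrDr.
apply: le_lt_trans (_ : _ <= `|psi f| + A + A) _.
  rewrite -addrA (addrC A) addrA; apply: lerD; first exact: le_trans h1 h2.
  by apply: ler_piMl => //; rewrite normr_ge0.
rewrite -addrA ltrD2l.
rewrite {1}(splitr e).
exact: ltrD.
Qed.
End Gen.
Lemma C0_of (F : numFieldType) (V : normedModType F) (y : V) (C : F) :
  1 <= C * `|y| -> 0 <= C.
Proof.
move=> h.
have y0 : 0 < `|y|.
  rewrite lt0r normr_ge0 andbT; apply/eqP => y0; move: h; rewrite y0 mulr0.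
  by rewrite ler10.
have -> : C = (C * `|y|) / `|y| by rewrite mulfK ?gt_eqF.
by rewrite divr_ge0 ?(le_trans ler01 h) ?ltW.
Qed.

Section RealCase.
Variables (R : realType) (V : normedModType R) (x : nat -> V) (xs : nat -> V -> R).
Hypothesis xs_lin : forall n a u v, xs n (a *: u + v) = a * xs n u + xs n v.
Hypothesis xs_bio : forall n k, xs n (x k) = (n == k)%:R.
Variables (C : R) (C0 : 0 <= C) (xs_bd : forall n v, `|xs n v| <= C * `|v|).

Lemma real_u (K : R) (u : V) : 1 <= K -> closure (lin_span x) = setT -> lin_span x u -> u != 0 ->
  (exists m, forall g, tail_span x m g -> `|u| <= K * `|u + g|) ->
  exists psi, [/\ dual_span xs psi, dual_norm_eq1 psi & `|u| <= K * `|psi u|].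
Proof.
move=> K1 cl Su u0 [m Hm].
have K0 : 0 < K by exact: lt_le_trans ltr01 K1.
have [N [a eu]] := (span_osum x u).1 Su.
set L := (m + N).+1.
pose T (v : V) : 'rV[R]_L := \row_(i < L) xs i v.
have Hq := Qlem xs_lin xs_bio Hm eu.
have TD : forall v w, T (v + w) = T v + T w.
  by move=> v w; apply/rowP => i; rewrite !mxE (xsD xs_lin).
have T0 : T 0 = 0 by apply/rowP => i; rewrite !mxE (xs0 xs_lin).
have TZ : forall t v, T (t *: v) = t *: T v.
  by move=> t v; apply/rowP => i; rewrite !mxE (xsZ xs_lin).
have Tsurj : forall b : 'rV[R]_L, exists2 v, lin_span x v & T v = b.
  move=> b; exists (osum x L (fun i => b 0 (inord i))).
    by apply/span_osum; eexists; eexists.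
  by apply/rowP => i; rewrite !mxE (xs_osum xs_lin xs_bio) ltn_ord inord_val.
have nZ : forall (t : R) (v : V), 0 < t -> `|t *: v| = t * `|v|.
  by move=> t v t0; rewrite normrZ gtr0_norm.
have Hyp : forall v, lin_span x v -> T v = T u -> `|u| / K <= `|v|.
  move=> v Sv Tv; rewrite ler_pdivrMr // mulrC; apply: Hq => // i iL.
  have := congr1 (fun M : 'rV[R]_L => M 0 (inord i)) Tv.
  by rewrite !mxE inordK // ltnS.
have [c [Hc Hr Happ]] := @key R V (lin_span x) (fun v => `|v|) (fun t v => t *: v) L T
   (span0 x) (fun t v _ Sv => span_scale t Sv) (@normr_ge0 _ _) (normr0 _) (@ler_normD _ _)
   nZ (@span_add _ _ x) TD T0 TZ Tsurj u (`|u| / K) Su Hyp.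
pose g i := c (inord i) 0.
have ellT v : ell c (T v) = dfun xs L g v.
  rewrite /ell /dfun mxE; apply: eq_bigr => i _; rewrite mxE mulrC /g inord_val //.
have Hle : forall v, `|dfun xs L g v| <= `|v|.
  apply: (dfun_ext xs_lin C0 xs_bd cl) => v Sv.
  rewrite ler_norml -ellT Hc // andbT lerNl -normrN.
  have := Hc _ (span_scale (-1) Sv); rewrite TZ /ell -scalemxAl mxE scaleN1r mulN1r.
  by rewrite -/(ell c (T v)).
apply: (finish_u xs_lin K1 u0 Hle).
  rewrite -ler_pdivrMl // mulrC; apply: le_trans Hr _; rewrite ellT; exact: ler_norm.
move=> e e0; have [v [Sv Tv Hv]] := Happ e e0.
exists v; split; first by rewrite -!ellT Tv.
apply: lt_le_trans Hv _; rewrite lerD2r ellT; exact: ler_norm.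
Qed.
End RealCase.

Lemma Cor33R (R : realType) : Cor33 R.
Proof.
move=> V x xs K [cl [dl bio]] K1 [C HC] Hp.
have xs_lin : forall n a u v, xs n (a *: u + v) = a * xs n u + xs n v.
  by move=> n; case: (dl n).
have C0 : 0 <= C.
  by apply: (C0_of (y := x 0)); have := HC 0%N (x 0); rewrite bio eqxx normr1.
have archi : forall y : R, 0 <= y -> exists k : nat, y < k%:R.
  by move=> y y0; exists (Num.bound y); exact: archi_boundP.
have P1 f : lin_span x f -> exists m, forall g, tail_span x m g -> `|f| <= K * `|f + g|.
  by move=> Sf; exact: (part1 xs_lin bio C0 HC archi K1 (Hp f Sf)).
split => //.
apply: (norming_from xs_lin bio K1 cl) => u Su u0.
exact: (real_u xs_lin bio C0 HC K1 cl Su u0 (P1 u Su)).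
Qed.
Local Notation cRe := complex.Re.
Local Notation cIm := complex.Im.
Section CHelp.
Variable R : realType.
Local Open Scope complex_scope.
Implicit Types a b z : complex R.
Lemma ReD a b : cRe (a + b) = cRe a + cRe b. Proof. by case: a => ? ?; case: b => ? ?; simpc. Qed.
Lemma ImD a b : cIm (a + b) = cIm a + cIm b. Proof. by case: a => ? ?; case: b => ? ?; simpc. Qed.
Lemma Re0 : cRe (0 : complex R) = 0. Proof. by []. Qed.
Lemma ReMr (t : R) z : cRe (t%:C * z) = t * cRe z.
Proof. by case: z => p q; simpc. Qed.
Lemma ImMr (t : R) z : cIm (t%:C * z) = t * cIm z.
Proof. by case: z => p q; simpc. Qed.
Lemma Re_mk (p q : R) : cRe (p%:C + 'i * q%:C) = p.
Proof. by simpc. Qed.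
Lemma Im_mk (p q : R) : cIm (p%:C + 'i * q%:C) = q.
Proof. by simpc. Qed.
Lemma Re_g (p q : R) z : cRe ((p%:C - 'i * q%:C) * z) = p * cRe z + q * cIm z.
Proof. by case: z => s t; simpc. Qed.
Lemma cplx_ext a b : cRe a = cRe b -> cIm a = cIm b -> a = b.
Proof. by case: a; case: b => ? ? ? ? /= -> ->. Qed.
Lemma Re_sum L (f : 'I_L -> complex R) : cRe (\sum_(i < L) f i) = \sum_(i < L) cRe (f i).
Proof. exact: (big_morph _ ReD Re0). Qed.
Lemma ge0_RC a : 0 <= a -> a = (cRe a)%:C.
Proof. by move=> a0; apply: cplx_ext => //=; rewrite (ger0_Im a0). Qed.
Lemma ge0_le a b : 0 <= a -> 0 <= b -> (a <= b) = (cRe a <= cRe b).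
Proof. by move=> a0 b0; rewrite lecE (ger0_Im a0) (ger0_Im b0) eqxx. Qed.
Lemma le_Re a b : a <= b -> cRe a <= cRe b.
Proof. by rewrite lecE => /andP []. Qed.
Lemma Re_le_norm a : cRe a <= cRe `|a|.
Proof.
have := normc_ge_Re a; rewrite (ge0_RC (normr_ge0 a)) lecR.
by apply: le_trans; exact: ler_norm.
Qed.
Lemma ge0_Re a : 0 <= a -> 0 <= cRe a.
Proof. by move/le_Re. Qed.
Lemma natC k : (k%:R : complex R) = (k%:R : R)%:C.
Proof. by rewrite rmorph_nat. Qed.
End CHelp.
Section CplxCase.
Variables (R : realType) (V : normedModType (complex R)) (x : nat -> V)
  (xs : nat -> V -> complex R).
Local Open Scope complex_scope.
Local Notation cRe := complex.Re.
Local Notation cIm := complex.Im.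
Hypothesis xs_lin : forall n a u v, xs n (a *: u + v) = a * xs n u + xs n v.
Hypothesis xs_bio : forall n k, xs n (x k) = (n == k)%:R.
Variables (C : complex R) (C0 : 0 <= C) (xs_bd : forall n v, `|xs n v| <= C * `|v|).

Lemma cplx_u (K : complex R) (u : V) : 1 <= K -> closure (lin_span x) = setT ->
  lin_span x u -> u != 0 ->
  (exists m, forall g, tail_span x m g -> `|u| <= K * `|u + g|) ->
  exists psi, [/\ dual_span xs psi, dual_norm_eq1 psi & `|u| <= K * `|psi u|].
Proof.
move=> K1 cl Su u0 [m Hm].
have K0 : 0 < K by exact: lt_le_trans ltr01 K1.
have [N [a eu]] := (span_osum x u).1 Su.
set L := (m + N).+1.
pose T (v : V) : 'rV[R]_(L + L) :=
  row_mx (\row_(i < L) cRe (xs i v)) (\row_(i < L) cIm (xs i v)).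
have Hq := Qlem xs_lin xs_bio Hm eu.
have TD : forall v w, T (v + w) = T v + T w.
  move=> v w; rewrite /T add_row_mx; congr row_mx; apply/rowP => i;
  by rewrite !mxE (xsD xs_lin) ?ReD ?ImD.
have T0 : T 0 = 0.
  rewrite /T -row_mx0; congr row_mx; apply/rowP => i; by rewrite !mxE (xs0 xs_lin).
have TZ : forall t v, T (t%:C *: v) = t *: T v.
  move=> t v; rewrite /T scale_row_mx; congr row_mx; apply/rowP => i;
  by rewrite !mxE (xsZ xs_lin) ?ReMr ?ImMr.
have Tsurj : forall b : 'rV[R]_(L + L), exists2 v, lin_span x v & T v = b.
  move=> b.
  exists (osum x L (fun i => (lsubmx b 0 (inord i))%:C + 'i * (rsubmx b 0 (inord i))%:C)).
    by apply/span_osum; eexists; eexists.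
  rewrite -[RHS]hsubmxK /T; congr row_mx; apply/rowP => i;
  by rewrite !mxE (xs_osum xs_lin xs_bio) ltn_ord ?Re_mk ?Im_mk inord_val mxE.
have TE v w : T v = T w -> forall i, (i < L)%N -> xs i v = xs i w.
  move=> /eq_row_mx [H1 H2] i iL; apply: cplx_ext.
    by have := congr1 (fun M : 'rV[R]_L => M 0 (Ordinal iL)) H1; rewrite !mxE.
  by have := congr1 (fun M : 'rV[R]_L => M 0 (Ordinal iL)) H2; rewrite !mxE.
pose nrm (v : V) := cRe `|v|.
have nge0 : forall v, 0 <= nrm v by move=> v; exact: ge0_Re.
have n0 : nrm 0 = 0 by rewrite /nrm normr0.
have nD : forall v w, nrm (v + w) <= nrm v + nrm w.
  by move=> v w; rewrite /nrm -ReD; apply: le_Re; exact: ler_normD.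
have nZ : forall (t : R) (v : V), 0 < t -> nrm (t%:C *: v) = t * nrm v.
  move=> t v t0; rewrite /nrm normrZ gtr0_norm ?ReMr //.
  by rewrite ltcR.
have Hyp : forall v, lin_span x v -> T v = T u -> cRe (`|u| / K) <= nrm v.
  move=> v Sv Tv; apply: le_Re; rewrite ler_pdivrMr // mulrC; apply: Hq => // i iL.
  by apply: TE; rewrite // ltnS.
have [c [Hc Hr Happ]] := @key R V (lin_span x) nrm (fun t v => t%:C *: v) (L + L) T
   (span0 x) (fun t v _ Sv => span_scale t%:C Sv) nge0 n0 nD
   nZ (@span_add _ _ x) TD T0 TZ Tsurj u (cRe (`|u| / K)) Su Hyp.
pose g i := (usubmx c (inord i) 0)%:C - 'i * (dsubmx c (inord i) 0)%:C.
have ellT v : ell c (T v) = cRe (dfun xs L g v).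
  rewrite /ell -[c]vsubmxK /T mul_row_col mxE !mxE /dfun Re_sum -big_split /=.
  apply: eq_bigr => i _; rewrite /g Re_g inord_val !mxE.
  by rewrite [cRe _ * _]mulrC [cIm _ * _]mulrC.
have dE v w : T v = T w -> dfun xs L g v = dfun xs L g w.
  by move=> /TE H; apply: eq_bigr => i _; rewrite H.
have Hle : forall v, `|dfun xs L g v| <= `|v|.
  apply: (dfun_ext xs_lin C0 xs_bd cl) => v Sv.
  set z := dfun xs L g v.
  have [->|z0] := eqVneq z 0; first by rewrite normr0 normr_ge0.
  set w := `|z| / z.
  have wz : w * z = `|z| by rewrite /w mulfVK.
  have w1 : `|w| = 1 by rewrite /w normf_div normr_id divff // normr_eq0.
  have Sw : lin_span x (w *: v) by exact: span_scale.
  have := Hc _ Sw; rewrite ellT /nrm (dfunZ xs_lin) -/z wz normrZ w1 mul1r.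
  by rewrite ge0_le ?normr_ge0.
apply: (finish_u xs_lin K1 u0 Hle).
  rewrite -ler_pdivrMl // mulrC ge0_le ?normr_ge0 //; last first.
    by rewrite divr_ge0 ?normr_ge0 // ltW.
  by apply: le_trans Hr _; rewrite ellT; exact: Re_le_norm.
move=> e e0.
have e0' : 0 < cRe e by move: e0; rewrite ltcE => /andP [].
have [v [Sv Tv Hv]] := Happ _ e0'.
exists v; split; first exact: dE.
rewrite ltcE ImD (ger0_Im (ltW e0)) (ger0_Im (normr_ge0 _)) (ger0_Im (normr_ge0 v)).
rewrite addr0 eqxx /= ReD; apply: lt_le_trans Hv _; rewrite lerD2r ellT.
exact: Re_le_norm.
Qed.
End CplxCase.

Lemma Cor33C (R : realType) : Cor33 (complex R).
Proof.
move=> V x xs K [cl [dl bio]] K1 [C HC] Hp.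
have xs_lin : forall n a u v, xs n (a *: u + v) = a * xs n u + xs n v.
  by move=> n; case: (dl n).
have C0 : 0 <= C.
  by apply: (C0_of (y := x 0)); have := HC 0%N (x 0); rewrite bio eqxx normr1.
have archi : forall y : complex R, 0 <= y -> exists k : nat, y < k%:R.
  move=> y y0; exists (Num.bound (complex.Re y)).
  rewrite (ge0_RC y0) natC ltcR; apply: archi_boundP; exact: ge0_Re.
have P1 f : lin_span x f -> exists m, forall g, tail_span x m g -> `|f| <= K * `|f + g|.
  by move=> Sf; exact: (part1 xs_lin bio C0 HC archi K1 (Hp f Sf)).
split => //.
apply: (norming_from xs_lin bio K1 cl) => u Su u0.
exact: (cplx_u xs_lin bio C0 HC K1 cl Su u0 (P1 u Su)).
Qed.

Theorem corollary3p3 (R : realType) : Cor33 R /\ Cor33 (complex R).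
Proof. by split; [exact: Cor33R | exact: Cor33C]. Qed.
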